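(* Let $k$ be an algebraically closed field of characteristic zero. Let $s,m,d$ be nonnegative integers with $d\ge m-1$. Let $X\subset\mathbb{P}^2_k$ be a generic union of an $m$-multiple point $mP$ and $s$ $2$-dots $Z_1,\dots,Z_s$. Then $X$ has good postulation in degree $d$, i.e. $$h^0(\mathcal{I}_X(d))=\max\left\{\binom{d+2}{2}-\binom{m+1}{2}-2s,\,0\right\}.$$
   Context: For a point $P\in\mathbb{P}^2$ and an integer $m\ge 1$, the $m$-multiple point $mP$ is the zero-dimensional subscheme defined by the ideal sheaf $\mathcal{I}_P^m$ (for $m=0$ it is empty); it has length $\binom{m+1}{2}$. A double point is $2P$. A $2$-dot is a subscheme of length $2$ of a double point (i.e. a point together with a tangent direction). ''Generic union'' means the point $P$ and the $2$-dots are chosen generically (in a nonempty open subset of the corresponding parameter space). $\mathcal{I}_X$ is the ideal sheaf of $X$ and $h^0(\mathcal{F})=\dim_k H^0(\mathbb{P}^2,\mathcal{F})$. *)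

(* Defs.v *)
From HB Require Import structures.
From mathcomp Require Import all_boot all_order all_algebra.
From mathcomp Require Import mpoly.
Set Implicit Arguments. Unset Strict Implicit. Unset Printing Implicit Defensive.
Import Order.TTheory GRing.Theory.
Local Open Scope ring_scope.

Section Postulation.
Variable k : fieldType.

(* Homogeneous coordinates of a point of P^2 (or of a vector of k^3). *)
Definition vec3 := 'I_3 -> k.

(* Monomials of degree exactly d in x_0, x_1, x_2: a basis of H^0(O(d)). *)
Definition hmon (d : nat) := {mu : 'X_{1..3 < d.+1} | mdeg mu == d}.

Definition form_of (d : nat) (c : {ffun hmon d -> k^o}) : {mpoly k[3]} :=
  \sum_(mu : hmon d) c mu *: 'X_[(val mu : 'X_{1..3})].

(* Index set of the linear conditions imposed by X = mP + Z_1 + ... + Z_s: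
   - inl a  (a multi-index of order < m): the partial derivative d^a F
     vanishes at P   (F in I_P^m);
   - inr (i, false): F(Q_i) = 0;
   - inr (i, true) : the derivative of F at Q_i in the direction V_i is 0
     (the 2-dot supported at Q_i with tangent direction V_i). *)
Definition cond (m s : nat) := ('X_{1..3 < m} + 'I_s * bool)%type.

Definition cond_val (m s : nat) (P : vec3) (Q V : 'I_s -> vec3)
    (F : {mpoly k[3]}) (j : cond m s) : k :=
  match j with
  | inl a => (F^`M[(a : 'X_{1..3})]).@[P]
  | inr (i, false) => F.@[Q i]
  | inr (i, true) => \sum_(l < 3) V i l * (F^`M(l)).@[Q i]
  end.

Definition ev_map (d m s : nat) (P : vec3) (Q V : 'I_s -> vec3)
    (c : {ffun hmon d -> k^o}) : {ffun cond m s -> k^o} :=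
  [ffun j => cond_val P Q V (form_of c) j].

Definition h0_IX (d m s : nat) (P : vec3) (Q V : 'I_s -> vec3) : nat :=
  \dim (lker (linfun (@ev_map d m s P Q V))).

(* Parameter space (affine): x in k^(6s+3) encodes P (coords 0..2),
   and for each i < s the support point Q_i (coords 3+6i .. 5+6i) and the
   tangent direction V_i (coords 6+6i .. 8+6i) of the i-th 2-dot. *)
Definition par_P (s : nat) (x : 'I_(6 * s + 2).+1 -> k) : vec3 :=
  fun j => x (inord j).
Definition par_Q (s : nat) (x : 'I_(6 * s + 2).+1 -> k) : 'I_s -> vec3 :=
  fun i j => x (inord (3 + 6 * i + j)).
Definition par_V (s : nat) (x : 'I_(6 * s + 2).+1 -> k) : 'I_s -> vec3 :=
  fun i j => x (inord (6 + 6 * i + j)).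

End Postulation.
Arguments h0_IX {k} d m s P Q V.

(* Main.v *)
Require Import Defs.
From HB Require Import structures.
From mathcomp Require Import all_boot all_order all_algebra.
From mathcomp Require Import mpoly zify ring.
From Stdlib Require Import Lia Classical.
Import GRing.Theory.
Local Open Scope ring_scope.
Set Implicit Arguments. Unset Strict Implicit. Unset Printing Implicit Defensive.


Local Notation widen := (widen_ord (leqnSn _)).

Section NZ.
Variable R : idomainType.
Hypothesis Rinf : forall (p : {poly R}), p != 0 -> exists t, p.[t] != 0.

Definition mtrunc n (m : 'X_{1..n.+1}) : 'X_{1..n} := [multinom m (widen i) | i < n].
Definition mextf n (m0 : 'X_{1..n}) (j : nat) (i : 'I_n.+1) : nat :=
  nth j (tval (multinom_val m0)) i.
Definition mext n (m0 : 'X_{1..n}) (j : nat) : 'X_{1..n.+1} :=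
  [multinom mextf m0 j i | i < n.+1].
Definition vext n (v : 'I_n -> R) (t : R) : 'I_n.+1 -> R :=
  fun i => nth t [tuple v j | j < n] i.

Lemma mext_max n (m0 : 'X_{1..n}) j : mext m0 j ord_max = j.
Proof. by rewrite mnmE /mextf nth_default // size_tuple. Qed.

Lemma mext_widen n (m0 : 'X_{1..n}) j i : mext m0 j (widen i) = m0 i.
Proof. by rewrite mnmE /mextf /= (mnm_nth j). Qed.

Lemma mtrunc_ext n (m0 : 'X_{1..n}) j : mtrunc (mext m0 j) = m0.
Proof. by apply/mnmP => i; rewrite mnmE mext_widen. Qed.

Lemma mext_trunc n (m : 'X_{1..n.+1}) : mext (mtrunc m) (m ord_max) = m.
Proof.
apply/mnmP => i; rewrite mnmE /mextf.
case: (ltnP i n) => h.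
  have e : (i : nat) = Ordinal h by [].
  rewrite e -(mnm_nth (m ord_max)) mnmE.
  by congr (m _); apply/val_inj.
rewrite nth_default ?size_tuple //.
by congr (m _); apply/val_inj => /=; apply/eqP; rewrite eqn_leq h -ltnS ltn_ord.
Qed.

Lemma vext_widen n (v : 'I_n -> R) t i : vext v t (widen i) = v i.
Proof. by rewrite /vext /= nth_mktuple. Qed.

Lemma vext_max n (v : 'I_n -> R) t : vext v t ord_max = t.
Proof. by rewrite /vext nth_default // size_tuple. Qed.

Lemma mnm_le_mdeg n (m : 'X_{1..n}) i : (m i <= mdeg m)%N.
Proof. by rewrite mdegE (bigD1 i) //= leq_addr. Qed.

Definition cj n (p : {mpoly R[n.+1]}) (j : nat) : {mpoly R[n]} :=
  \sum_(m <- msupp p | m ord_max == j) p@_m *: 'X_[mtrunc m].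

Lemma sum_pick (T : eqType) (s : seq T) (x : T) (F : T -> R) :
  uniq s -> (x \notin s -> F x = 0) ->
  \sum_(m <- s) (if m == x then F m else 0) = F x.
Proof.
move=> us hx; case: (boolP (x \in s)) => xs.
  rewrite (bigD1_seq x) //= eqxx big1 ?addr0 // => i /negbTE ->//.
rewrite hx // big_seq big1 // => i iS; case: eqP => // ei.
by move: iS; rewrite ei (negbTE xs).
Qed.

Lemma cjE n (p : {mpoly R[n.+1]}) j m0 : (cj p j)@_m0 = p@_(mext m0 j).
Proof.
rewrite /cj raddf_sum /= big_mkcond /=.
rewrite (eq_bigr (fun m => if m == mext m0 j then p@_m else 0)); last first.
  move=> m _; rewrite mcoeffZ mcoeffX.
  have -> : (m == mext m0 j) = (m ord_max == j) && (mtrunc m == m0).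
    apply/eqP/andP => [->|[/eqP h1 /eqP h2]]; first by rewrite mext_max mtrunc_ext.
    by rewrite -h1 -h2 mext_trunc.
  by case: (m ord_max == j); case: (mtrunc m == m0); rewrite ?mulr1 ?mulr0.
by apply: sum_pick; [exact: msupp_uniq | move/memN_msupp_eq0].
Qed.

Definition Qv n (p : {mpoly R[n.+1]}) (v : 'I_n -> R) : {poly R} :=
  \poly_(j < msize p) (cj p j).@[v].

Lemma QvE n (p : {mpoly R[n.+1]}) v t : (Qv p v).[t] = p.@[vext v t].
Proof.
rewrite /Qv horner_poly mevalE.
under eq_bigr => j _ do rewrite /cj raddf_sum /= big_distrl /=.
rewrite (eq_bigr (fun j : 'I_(msize p) => \sum_(m <- msupp p)
   (if m ord_max == j then p@_m * \prod_(i < n) v i ^+ mtrunc m i * t ^+ m ord_max else 0)));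
  last first.
  move=> j _; rewrite big_mkcond /=; apply: eq_bigr => m _.
  case: eqP => [<-|//]; by rewrite mevalZ mevalX.
rewrite exchange_big /=; apply: eq_big_seq => m hm.
have hlt : (m ord_max < msize p)%N.
  exact: leq_ltn_trans (mnm_le_mdeg _ _) (msize_mdeg_lt hm).
rewrite (bigD1 (Ordinal hlt)) //= eqxx [X in _ + X = _]big1 ?addr0; last first.
  move=> j hj; case: (m ord_max =P j) => // e; move: hj; suff -> : j = Ordinal hlt by rewrite eqxx.
  by apply/val_inj; rewrite /= e.
rewrite big_ord_recr /= -mulrA; congr (_ * (_ * _)).
  by apply: eq_bigr => i _; rewrite vext_widen mnmE.
by rewrite vext_max.
Qed.

Lemma mpoly_nz_point n (p : {mpoly R[n]}) : p != 0 -> exists v, p.@[v] != 0.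
Proof.
elim: n p => [|n IH] p pnz.
  exists (fun _ => 0).
  have -> : p = (p@_0%MM)%:MP.
    apply/mpolyP => m; rewrite mcoeffC nvar0_mnmE eqxx mulr1 //.
  rewrite mevalC; apply: contraNneq pnz => h.
  apply/eqP/mpolyP => m; rewrite nvar0_mnmE h mcoeff0 //.
have /mlead_supp hm := pnz; set m := mlead p in hm.
set j := m ord_max.
have cnz : cj p j != 0.
  apply/eqP => /mpolyP /(_ (mtrunc m)); rewrite cjE mext_trunc mcoeff0 => h.
  by move: hm; rewrite mcoeff_msupp h eqxx.
have [v hv] := IH _ cnz.
have hlt : (j < msize p)%N.
  exact: leq_ltn_trans (mnm_le_mdeg _ _) (msize_mdeg_lt hm).
have Qnz : Qv p v != 0.
  apply/eqP => /(congr1 (fun q : {poly R} => q`_j)); rewrite coef_poly hlt coef0.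
  by move/eqP; rewrite (negbTE hv).
have [t ht] := Rinf Qnz.
by exists (vext v t); rewrite -QvE.
Qed.

End NZ.

Lemma char0_inf (R : idomainType) : [pchar R] =i pred0 ->
  forall (p : {poly R}), p != 0 -> exists t, p.[t] != 0.
Proof.
move=> c0 p pnz.
have hnat : forall i j : nat, (i%:R == j%:R :> R) = (i == j).
  have cf := (pcharf0P R).1 c0.
  move=> i j; wlog le : i j / (i <= j)%N.
    by move=> H; case: (leqP i j) => h; [|rewrite eq_sym [(i == j)]eq_sym]; apply: H => //; apply: ltnW.
  have E : j%:R - i%:R = (j - i)%:R :> R by rewrite natrB.
  by rewrite eq_sym -subr_eq0 E cf subn_eq0 eqn_leq le.
pose rs := [seq i%:R : R | i <- iota 0 (size p)].
case: (boolP (all (root p) rs)) => h.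
  have := max_poly_roots pnz h.
  rewrite map_inj_uniq ?iota_uniq; last by move=> i j /eqP; rewrite hnat => /eqP.
  by rewrite size_map size_iota ltnn => /(_ isT).
have [x _ hx] := allPn h; by exists x.
Qed.


Lemma mpoly_morph_eq n (R : nzRingType) (S : nzRingType)
  (f g : {rmorphism {mpoly R[n]} -> S}) :
  (forall c, f c%:MP = g c%:MP) -> (forall i, f 'X_i = g 'X_i) -> f =1 g.
Proof.
move=> hc hX p; rewrite (mpolyE p) !rmorph_sum; apply: eq_bigr => m _.
rewrite -mul_mpolyC !rmorphM hc; congr (_ * _).
by rewrite mpolyXE_id !rmorph_prod; apply: eq_bigr => i _; rewrite !rmorphXn hX.
Qed.

Section Line.
Variable R : comNzRingType.
Variable n : nat.
Variables a b : 'I_n -> R.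

Definition line : 'I_n -> {poly R} := fun i => (a i)%:P + (b i)%:P * 'X.
Definition rl (F : {mpoly R[n]}) : {poly R} := mmap (@polyC R) line F.

HB.instance Definition _ := GRing.RMorphism.copy rl (mmap (@polyC R) line).

Lemma rlC c : rl c%:MP = c%:P.
Proof. by rewrite /rl mmapC. Qed.

Lemma rlX i : rl 'X_i = line i.
Proof. by rewrite /rl mmapX mmap1U. Qed.

Lemma rl_horner F t : (rl F).[t] = F.@[fun i => a i + t * b i].
Proof.
have -> : (rl F).[t] = (horner_eval t \o rl) F by [].
apply: (@mpoly_morph_eq _ _ _ (horner_eval t \o rl) (meval (fun i => a i + t * b i))) => [c|i].
  by rewrite /= /horner_eval rlC hornerC mevalC.
rewrite /= /horner_eval rlX mevalXU /line hornerD hornerC hornerMX hornerC.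
by rewrite mulrC.
Qed.

Definition D1 F := (rl F)^`().
Definition D2 F := \sum_(l < n) (b l)%:P * rl (F^`M(l)).

Lemma D_all F : D1 F = D2 F.
Proof.
pose P F := D1 F = D2 F.
have P0 : P 0 by rewrite /P /D1 /D2 rmorph0 deriv0 big1 // => l _; rewrite mderiv0 rmorph0 mulr0.
have PD F1 F2 : P F1 -> P F2 -> P (F1 + F2).
  rewrite /P /D1 /D2 => h1 h2; rewrite rmorphD derivD h1 h2 -big_split /=.
  by apply: eq_bigr => l _; rewrite mderivD rmorphD mulrDr.
have PM F1 F2 : P F1 -> P F2 -> P (F1 * F2).
  rewrite /P /D1 /D2 => h1 h2; rewrite rmorphM derivM h1 h2 big_distrl big_distrr -big_split /=.
  by apply: eq_bigr => l _; rewrite mderivM rmorphD !rmorphM mulrDr !mulrA [_ * rl F1]mulrC.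
have PC c : P c%:MP.
  rewrite /P /D1 /D2 rlC derivC big1 // => l _; by rewrite mderivC rmorph0 mulr0.
have PX i : P 'X_i.
  rewrite /P /D1 /D2 rlX /line derivD derivC add0r derivM derivC mul0r add0r derivX mulr1.
  rewrite (bigD1 i) //= big1 ?addr0.
    have -> : ('X_i : {mpoly R[n]})^`M(i) = 1.
      have e0 : (U_(i) - U_(i) = 0 :> 'X_{1..n})%MM.
        by apply/mnmP => j; rewrite mnmBE mnm0E subnn.
      by rewrite mderivX mnm1E eqxx /= e0 mpolyX0 scale1r.
    by rewrite rmorph1 mulr1.
  move=> l hl; have -> : ('X_i : {mpoly R[n]})^`M(l) = 0.
    by rewrite mderivX mnm1E eq_sym (negbTE hl) scale0r.
  by rewrite rmorph0 mulr0.
rewrite (mpolyE F); apply: (big_ind P) => //.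
move=> m _; rewrite -mul_mpolyC; apply: (PM) => //.
rewrite mpolyXE_id; apply: (big_ind P) => //; first by rewrite -[1]/(1%:MP); apply: (PC).
move=> i Hi; elim: (m i) => [|e IH]; first by rewrite expr0 -[1]/(1%:MP); apply: (PC).
by rewrite exprS; apply: (PM).
Qed.

End Line.


Lemma uni_wr (R : idomainType) (c0 : [pchar R] =i pred0) (phi eta : {poly R}) :
  phi`_0 != 0 -> eta`_0 = 0 -> phi * eta^`() = eta * phi^`() -> eta = 0.
Proof.
move=> p0 e0 heq; apply/eqP; apply: contraT => enz.
have ex : exists i, eta`_i != 0.
  exists (size eta).-1; by rewrite -lead_coefE lead_coef_eq0.
case: (ex_minnP ex) => k hk kmin.
have k0 : (0 < k)%N by case: k hk {kmin} => [|k] //; rewrite e0 eqxx.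
have low : forall i, (i < k)%N -> eta`_i = 0.
  by move=> i hi; apply/eqP; apply: contraT => h; have := kmin _ h; rewrite leqNgt hi.
have := congr1 (fun q : {poly R} => q`_k.-1) heq; rewrite !coefM /=.
rewrite [X in _ = X]big1; last first.
  move=> j _; rewrite low ?mul0r //; have := ltn_ord j; lia.
rewrite big_ord_recl /= [X in _ + X]big1; last first.
  move=> j _; rewrite coef_deriv low ?mul0rn ?mulr0 //.
  rewrite /bump /=; have := ltn_ord j; lia.
rewrite addr0 subn0 coef_deriv prednK // => /eqP.
rewrite -mulr_natr !mulf_eq0 (negbTE p0) (negbTE hk) /= ((pcharf0P R).1 c0).
by rewrite eqn0Ngt k0.
Qed.

Lemma wronsk (K : fieldType) (c0 : [pchar K] =i pred0) n (F G : {mpoly K[n]}) :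
  F != 0 -> (forall q l, F.@[q] * (G^`M(l)).@[q] = G.@[q] * (F^`M(l)).@[q]) ->
  exists c, G = c *: F.
Proof.
move=> Fnz hw.
have Rinf := char0_inf c0.
have [a ha] := mpoly_nz_point Rinf Fnz.
pose c := G.@[a] / F.@[a].
exists c; apply/eqP; rewrite -subr_eq0.
set H := G - c *: F.
apply: contraT => Hnz.
have [p hp] := mpoly_nz_point Rinf Hnz.
pose b := fun i => p i - a i.
have hH : forall q l, F.@[q] * (H^`M(l)).@[q] = H.@[q] * (F^`M(l)).@[q].
  move=> q l; rewrite /H mderivB mderivZ !mevalB !mevalZ.
  rewrite mulrBr mulrBl hw; ring.
have Wl : forall l, F * H^`M(l) - H * F^`M(l) = 0.
  move=> l; apply/eqP; apply: contraT => W; have [q hq] := mpoly_nz_point Rinf W.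
  by move: hq; rewrite mevalB !mevalM hH subrr eqxx.
have Ha : H.@[a] = 0.
  by rewrite /H mevalB mevalZ /c divfK // subrr.
have e1 : (rl a b H).[1] = H.@[p].
  by rewrite rl_horner; apply: meval_eq => i; rewrite mul1r /b addrC subrK.
have e0 : (rl a b H)`_0 = 0.
  rewrite -horner_coef0 rl_horner -[RHS]Ha; apply: meval_eq => i; by rewrite mul0r addr0.
have p0 : (rl a b F)`_0 != 0.
  rewrite -horner_coef0 rl_horner; rewrite (@meval_eq _ _ _ a) //.
  by move=> i; rewrite mul0r addr0.
have : rl a b H = 0.
  apply: (uni_wr c0 p0 e0).
  have -> : (rl a b H)^`() = D1 a b H by [].
  have -> : (rl a b F)^`() = D1 a b F by [].
  rewrite !D_all /D2 !big_distrr; apply: eq_bigr => l _.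
  have := congr1 (rl a b) (Wl l); rewrite rmorphB !rmorphM rmorph0 => /eqP.
  rewrite subr_eq0 => /eqP h.
  change (rl a b F * ((b l)%:P * rl a b H^`M(l)) = rl a b H * ((b l)%:P * rl a b F^`M(l))).
  by rewrite mulrCA h mulrCA.
by move=> e; move: hp; rewrite -e1 e horner0 eqxx.
Qed.


Lemma dim_ffunK (K : fieldType) (J : finType) : dim {ffun J -> K^o} = #|J|.
Proof. exact: muln1. Qed.

Lemma dim_ker_ge (K : fieldType) (V : vectType K) (J : finType)
  (T : 'Hom(V, {ffun J -> K^o})) : (dim V - #|J| <= \dim (lker T))%N.
Proof.
have := limg_ker_dim T fullv; rewrite capfv dimvf.
have : (\dim (T @: fullv) <= #|J|)%N.
  by rewrite -(dim_ffunK K J) -dimvf dimvS // subvf.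
lia.
Qed.

Lemma dim_ub (K : fieldType) (V : vectType K) (r : nat)
  (phi : 'I_r -> V -> K) (us : 'I_r -> V) (U : {vspace V}) :
  (forall a, linear_for *%R (phi a)) ->
  \det (\matrix_(a, b) phi a (us b)) != 0 ->
  (forall v a, v \in U -> phi a v = 0) ->
  (\dim U + r <= dim V)%N.
Proof.
move=> lin dnz hU.
pose A := \matrix_(a, b) phi a (us b).
have Au : A^T \in unitmx by rewrite unitmxE det_tr unitfE.
have ph0 : forall a, phi a 0 = 0.
  by move=> a; have := lin a (-1) 0 0; rewrite scaler0 add0r mulN1r addNr.
have phisum : forall (c : 'I_r -> K) a,
    phi a (\sum_b c b *: us b) = \sum_b c b * A a b.
  move=> c a; apply: (big_rec2 (fun y1 y2 => phi a y1 = y2)) => [|b y1 y2 _ <-].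
    exact: ph0.
  by rewrite (lin a) mxE.
have key : forall c : 'I_r -> K, (forall a, \sum_b c b * A a b = 0) -> forall b, c b = 0.
  move=> c hc b.
  have h0 : (\row_b c b) *m A^T = 0.
    by apply/rowP => a; rewrite !mxE -[RHS](hc a); apply: eq_bigr => i _; rewrite !mxE.
  have : (\row_b c b) = 0 by rewrite -[LHS](mulmxK Au) h0 mul0mx.
  by move/rowP/(_ b); rewrite !mxE.
pose X := [tuple us b | b < r].
have Xi : forall b : 'I_r, X`_b = us b by move=> b; rewrite -tnth_nth tnth_mktuple.
have fX : free X.
  apply/freeP => c hc b; apply: key => a.
  rewrite -phisum; under eq_bigr do rewrite -Xi; by rewrite hc.
have dX : \dim <<X>> = r by move: fX; rewrite /free size_tuple => /eqP.
have cap : (U :&: <<X>> = 0)%VS.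
  apply/eqP; rewrite -subv0; apply/subvP => v; rewrite memv_cap => /andP[vU vX].
  rewrite memv0; rewrite (coord_span vX).
  have hc := key (fun b => coord X b v).
  rewrite big1 // => b _; rewrite hc ?scale0r // => a.
  rewrite -phisum -(hU v a vU); congr (phi a _).
  by rewrite [in RHS](coord_span vX); apply: eq_bigr => i _; rewrite Xi.
rewrite -dX -dimv_disjoint_sum // -dimvf; exact: dimvS (subvf _).
Qed.

Lemma lfunE' (K : fieldType) (V W : vectType K) (f : V -> W) :
  linear f -> forall v, linfun f v = f v.
Proof.
move=> lf v.
pose g : {linear V -> W} := HB.pack f (GRing.isLinear.Build K V W *:%R f lf).
exact: (lfunE g v).
Qed.

Lemma ker_family (K : fieldType) (V : vectType K) (J : finType) (psi : J -> V -> K) :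
  (forall j, linear_for *%R (psi j)) ->
  exists U : {vspace V}, (dim V - #|J| <= \dim U)%N /\
    forall v, v \in U -> forall j, psi j v = 0.
Proof.
move=> lin.
pose f := fun v : V => [ffun j => (psi j v : K^o)] : {ffun J -> K^o}.
have lf : linear f.
  by move=> a u v; apply/ffunP => j; rewrite !ffunE (lin j).
exists (lker (linfun f)); split; first exact: dim_ker_ge.
move=> v; rewrite memv_ker lfunE' // => /eqP /ffunP h j.
by have := h j; rewrite !ffunE.
Qed.


Section Prob.
Variable k : fieldType.
Hypothesis c0 : [pchar k] =i pred0.
Variables d m s : nat.

Local Notation W := {ffun hmon d -> k^o}.

Lemma form_ofE (c : W) : form_of c =
  \sum_(mu : hmon d) ((c mu : k) *: ('X_[val (val mu)] : {mpoly k[3]})).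
Proof. by []. Qed.

Lemma form_of_lin : linear (@form_of k d).
Proof.
move=> a c1 c2; rewrite /form_of scaler_sumr -big_split /=; apply: eq_bigr => mu _.
by rewrite !ffunE scalerDl scalerA.
Qed.

Lemma form_ofD (c1 c2 : W) : form_of (c1 + c2) = form_of c1 + form_of c2.
Proof. by have := form_of_lin 1 c1 c2; rewrite !scale1r. Qed.
Lemma form_ofZ a (c : W) : form_of (a *: c) = a *: form_of c.
Proof.
have := form_of_lin a c 0; rewrite !addr0 => ->.
suff -> : form_of (0 : W) = 0 by rewrite addr0.
by rewrite /form_of big1 // => mu _; rewrite ffunE scale0r.
Qed.

Lemma cond_val_lin (P : vec3 k) Q V (j : cond m s) a F G :
  cond_val P Q V (a *: F + G) j = a * cond_val P Q V F j + cond_val P Q V G j.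
Proof.
case: j => [al|[i []]] /=.
- by rewrite mderivmD mderivmZ mevalD mevalZ.
- rewrite mulr_sumr -big_split /=; apply: eq_bigr => l _.
  by rewrite mderivD mderivZ mevalD mevalZ; ring.
- by rewrite mevalD mevalZ.
Qed.

Definition phi (P : vec3 k) Q V (j : cond m s) (c : W) : k :=
  cond_val P Q V (form_of c) j.

Lemma phi_lin P Q V j : linear_for *%R (phi P Q V j).
Proof. by move=> a u v; rewrite /phi form_of_lin cond_val_lin. Qed.

Lemma ev_map_lin P Q V : linear (@ev_map k d m s P Q V).
Proof.
by move=> a u v; apply/ffunP => j; rewrite !ffunE form_of_lin cond_val_lin.
Qed.

Lemma mem_K P Q V (c : W) : c \in lker (linfun (@ev_map k d m s P Q V)) ->
  forall j, phi P Q V j c = 0.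
Proof.
rewrite memv_ker lfunE'; last exact: ev_map_lin.
move=> /eqP /ffunP h j.
by have := h j; rewrite !ffunE.
Qed.

Lemma mem_K' P Q V (c : W) : (forall j, phi P Q V j c = 0) ->
  c \in lker (linfun (@ev_map k d m s P Q V)).
Proof.
move=> h; rewrite memv_ker lfunE'; last exact: ev_map_lin.
apply/eqP/ffunP => j.
by rewrite !ffunE; exact: h.
Qed.

Lemma eulerX (P : vec3 k) (nu : 'X_{1..3}) :
  \sum_(l < 3) P l * (('X_[nu] : {mpoly k[3]})^`M(l)).@[P] = (mdeg nu)%:R * ('X_[nu]).@[P].
Proof.
rewrite mdegE natr_sum mulr_suml; apply: eq_bigr => l _.
rewrite mderivX mevalZ.
case: (posnP (nu l)) => h; first by rewrite h !mul0r mulr0.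
have e : 'X_[nu] = ('X_l : {mpoly k[3]}) * 'X_[nu - U_(l)].
  rewrite -mpolyXD addmC submK //; apply/mnm_lepP => i.
  by rewrite mnm1E; case: eqP => [<-|]; rewrite ?h.
by rewrite [in RHS]e mevalM mevalXU; ring.
Qed.

Lemma euler_gen (P : vec3 k) (F : {mpoly k[3]}) (a : 'X_{1..3}) :
  F \is d.-homog ->
  (d - mdeg a)%:R * (F^`M[a]).@[P] =
  \sum_(l < 3) P l * (F^`M[a + U_(l)]).@[P].
Proof.
move=> hF; have hd := dhomog_mf hF.
rewrite (mpolyE F).
under [in RHS]eq_bigr => l _ do rewrite linear_sum raddf_sum /= mulr_sumr.
rewrite linear_sum raddf_sum /= mulr_sumr exchange_big /= !big_seq; apply: eq_bigr => mu hmu.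
rewrite !mderivmZ !mevalZ.
under [in RHS]eq_bigr => l _ do rewrite mderivmZ mevalZ mderivmDm mderivmU1m mderivmX mderivZ mevalZ.
rewrite mderivmX mevalZ.
set C := (\prod_(i < 3) _)%N.
have -> : \sum_(l < 3) P l * (F@_mu * (C%:R * (('X_[mu - a])^`M(l)).@[P])) =
   F@_mu * (C%:R * \sum_(l < 3) P l * ((('X_[mu - a] : {mpoly k[3]}))^`M(l)).@[P]).
  rewrite !mulr_sumr; apply: eq_bigr => l _; ring.
rewrite eulerX.
case: (posnP C) => hC; first by rewrite hC; ring.
have hle : (a <= mu)%MM.
  apply/mnm_lepP => i; rewrite leqNgt; apply/negP => hi.
  move: hC; rewrite /C (bigD1 i) //= ffact_small // mul0n ltnn.
have hm : mdeg (mu - a) = (d - mdeg a)%N.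
  have e : mdeg mu = (mdeg (mu - a) + mdeg a)%N by rewrite -mdegD submK.
  have hmd : mdeg mu = d := hd _ hmu. lia.
by rewrite hm; ring.
Qed.

Lemma form_of_homog (c : W) : form_of c \is d.-homog.
Proof.
rewrite form_ofE; apply: rpred_sum => mu _; apply: dhomogZ.
by rewrite dhomogX; case: mu => mu /=.
Qed.

Hypothesis hdm : (m <= d.+1)%N.

Definition Ttop := {a : 'X_{1..3 < m} | (mdeg a).+1 == m}.

Lemma natf_ne0 (n : nat) : (0 < n)%N -> n%:R != 0 :> k.
Proof. by move=> h; rewrite ((pcharf0P k).1 c0) -lt0n. Qed.

Lemma top_deriv (P : vec3 k) Q V (c : W) :
  (forall a : Ttop, phi P Q V (inl (val a)) c = 0) ->
  forall a : 'X_{1..3 < m}, phi P Q V (inl a) c = 0.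
Proof.
move=> htop a.
have claim : forall e (a : 'X_{1..3}), (mdeg a + e)%N = m.-1 ->
    ((form_of c)^`M[a]).@[P] = 0.
  elim=> [|e IH] a0 ha0.
    have h1 : (mdeg a0 < m)%N.
      by have := bmdeg a; lia.
    have h2 : (mdeg (BMultinom h1)).+1 == m.
      by apply/eqP => /=; have := bmdeg a; lia.
    exact: (htop (exist _ (BMultinom h1) h2)).
  have hlt : (mdeg a0 < d)%N by have := bmdeg a; lia.
  have := euler_gen P a0 (form_of_homog c).
  rewrite big1; last first.
    move=> l _; rewrite IH ?mulr0 //.
    by rewrite mdegD mdeg1; lia.
  move/eqP; rewrite mulf_eq0 (negbTE (natf_ne0 _)) /=; first by move/eqP.
  lia.
apply: (claim (m.-1 - mdeg a)%N).
have := bmdeg a; lia.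
Qed.

Lemma h0_lb (P : vec3 k) (Q V : 'I_s -> vec3 k) :
  (#|{: hmon d}| - (#|{: Ttop}| + 2 * s) <= h0_IX d m s P Q V)%N.
Proof.
pose J := (Ttop + 'I_s * bool)%type.
pose emb (j : J) : cond m s := match j with inl a => inl (val a) | inr p => inr p end.
have [U [hU hmem]] := @ker_family k W (Ttop + 'I_s * bool)%type (fun j => phi P Q V (emb j))
  (fun j => phi_lin P Q V (emb j)).
rewrite dim_ffunK card_sum card_prod card_ord card_bool in hU.
rewrite /h0_IX; apply: leq_trans _ (dimvS _).
  by rewrite mulnC; exact: hU.
apply/subvP => v hv; apply: mem_K' => -[a|p].
  by apply: top_deriv => a'; exact: (hmem v hv (inl a')).
exact: (hmem v hv (inr p)).
Qed.

End Prob.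


Section Poly.
Variable k : fieldType.
Variables d m s : nat.
Local Notation nn := (6 * s + 2).+1.
Local Notation W := {ffun hmon d -> k^o}.

Definition tP : 3.-tuple {mpoly k[nn]} := [tuple 'X_(inord i) | i < 3].
Definition tQ (i : 'I_s) : 3.-tuple {mpoly k[nn]} :=
  [tuple 'X_(inord (3 + 6 * i + l)) | l < 3].

Definition Ep (F : {mpoly k[3]}) (j : cond m s) : {mpoly k[nn]} :=
  match j with
  | inl a => (F^`M[(a : 'X_{1..3})]) \mPo tP
  | inr (i, false) => F \mPo tQ i
  | inr (i, true) => \sum_(l < 3) 'X_(inord (6 + 6 * i + l)) * (F^`M(l) \mPo tQ i)
  end.

Lemma EpE x F j : (Ep F j).@[x] = cond_val (par_P x) (par_Q x) (par_V x) F j.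
Proof.
case: j => [a|[i []]] /=.
- by rewrite comp_mpoly_meval; apply: meval_eq => l; rewrite tnth_mktuple mevalXU.
- rewrite raddf_sum /=; apply: eq_bigr => l _.
  rewrite mevalM mevalXU comp_mpoly_meval; congr (_ * _).
  by apply: meval_eq => l'; rewrite tnth_mktuple mevalXU.
- by rewrite comp_mpoly_meval; apply: meval_eq => l; rewrite tnth_mktuple mevalXU.
Qed.

Lemma poly_det r (js : 'I_r -> cond m s) (us : 'I_r -> W) :
  exists G : {mpoly k[nn]}, forall x,
    G.@[x] = \det (\matrix_(a, b) phi (par_P x) (par_Q x) (par_V x) (js a) (us b)).
Proof.
exists (\det (\matrix_(a, b) Ep (form_of (us b)) (js a))) => x.
rewrite -det_map_mx; congr (\det _); apply/matrixP => a b.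
by rewrite !mxE; apply: EpE.
Qed.

End Poly.


Lemma card_deg B e : (e < B)%N ->
  #|[pred a : 'X_{1..3 < B} | mdeg a == e]| = 'C(e.+2, 2).
Proof.
move=> heB.
set A := [pred a : 'X_{1..3 < B} | mdeg a == e].
have hp : perm_eq [seq val a | a <- enum A]
    [seq s2m t | t : e.-tuple 'I_3 <- enum (basis 3 e)].
  apply: uniq_perm; first by rewrite map_inj_uniq ?enum_uniq //; exact: val_inj.
    exact: uniq_basis.
  move=> x; rewrite -basis_cover; apply/mapP/idP => [[a ha ->]|hx].
    by move: ha; rewrite mem_enum inE.
  have hxB : (mdeg x < B)%N by move/eqP: hx => ->.
  exists (BMultinom hxB) => //; by rewrite mem_enum inE.
rewrite cardE -(size_map val) (perm_size hp) size_basis.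
have h := bin_sub (leq_addl e 2); rewrite addnK in h.
by rewrite h addn2.
Qed.

Lemma card_hmon d : #|{: hmon d}| = 'C(d.+2, 2).
Proof. by rewrite card_sig; apply: card_deg. Qed.

Lemma card_Ttop m : #|{: Ttop m}| = 'C(m.+1, 2).
Proof.
case: m => [|m].
  rewrite card_sig bin_small //; apply: eq_card0 => a.
  by have := bmdeg a.
rewrite card_sig -(card_deg (B := m.+1) (e := m)) //; apply: eq_card => a; by rewrite !inE eqSS.
Qed.

Definition trig (J V K : Type) (K0 : K) (psi : J -> V -> K) r (js : 'I_r -> J) (us : 'I_r -> V) :=
  (forall a b : 'I_r, (a < b)%N -> psi (js a) (us b) = K0) /\
  (forall a, psi (js a) (us a) <> K0).

Definition jcat (T : Type) r1 r2 (f : 'I_r1 -> T) (g : 'I_r2 -> T) : 'I_(r1 + r2) -> T :=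
  fun a => match split a with inl a0 => f a0 | inr a1 => g a1 end.

Lemma trig_cat (J V K : Type) (K0 : K) (psi : J -> V -> K) r1 r2
  (js1 : 'I_r1 -> J) (us1 : 'I_r1 -> V) (js2 : 'I_r2 -> J) (us2 : 'I_r2 -> V) :
  trig K0 psi js1 us1 -> trig K0 psi js2 us2 ->
  (forall a b, psi (js1 a) (us2 b) = K0) ->
  trig K0 psi (jcat js1 js2) (jcat us1 us2).
Proof.
move=> [t1 d1] [t2 d2] h12; split.
  move=> a b; rewrite /jcat.
  case: splitP => a0 ea; case: splitP => b0 eb; rewrite ea eb => hab.
  - exact: t1.
  - exact: h12.
  - by have := ltn_ord b0; lia.
  - by apply: t2; lia.
by move=> a; rewrite /jcat; case: splitP => a0 _; [exact: d1 | exact: d2].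
Qed.

Lemma trig_ext (J V K : Type) (K0 : K) (psi psi' : J -> V -> K) r
  (js : 'I_r -> J) (us : 'I_r -> V) :
  (forall a c, psi' (js a) c = psi (js a) c) ->
  trig K0 psi js us -> trig K0 psi' js us.
Proof. by move=> h [t1 d1]; split => [a b|a]; rewrite h; [exact: t1|exact: d1]. Qed.


Definition i0 : 'I_3 := @Ordinal 3 0 isT.
Definition i1 : 'I_3 := @Ordinal 3 1 isT.
Definition i2 : 'I_3 := @Ordinal 3 2 isT.

Lemma ord3P (Pr : 'I_3 -> Prop) : Pr i0 -> Pr i1 -> Pr i2 -> forall i, Pr i.
Proof.
move=> h0 h1 h2 [[|[|[|i]]] hi].
- by have -> : Ordinal hi = i0 by apply/val_inj.
- by have -> : Ordinal hi = i1 by apply/val_inj.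
- by have -> : Ordinal hi = i2 by apply/val_inj.
- by [].
Qed.

Lemma prod3 (R : comNzRingType) (F : 'I_3 -> R) : \prod_(i < 3) F i = F i0 * F i1 * F i2.
Proof.
rewrite !big_ord_recr big_ord0 /= Monoid.mul1m.
by congr (F _ * F _ * F _); apply/val_inj.
Qed.

Lemma prod3n (F : 'I_3 -> nat) : (\prod_(i < 3) F i = F i0 * F i1 * F i2)%N.
Proof.
rewrite !big_ord_recr big_ord0 /= Monoid.mul1m.
by congr (F _ * F _ * F _); apply/val_inj.
Qed.

Definition mk3 (x y z : nat) : 'X_{1..3} := [multinom (nth 0%N [:: x; y; z] i) | i < 3].

Lemma mk3E x y z : [/\ mk3 x y z i0 = x, mk3 x y z i1 = y & mk3 x y z i2 = z].
Proof. by rewrite !mnmE. Qed.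

Lemma mdeg3 (a : 'X_{1..3}) : mdeg a = (a i0 + a i1 + a i2)%N.
Proof. by rewrite mdegE !big_ord_recr big_ord0 /= add0n; congr (a _ + a _ + a _); apply/val_inj. Qed.

Lemma mdeg_mk3 x y z : mdeg (mk3 x y z) = (x + y + z)%N.
Proof. by rewrite mdeg3; case: (mk3E x y z) => -> -> ->. Qed.

Lemma mnm3P (a b : 'X_{1..3}) : a i0 = b i0 -> a i1 = b i1 -> a i2 = b i2 -> a = b.
Proof. by move=> h0 h1 h2; apply/mnmP; apply: ord3P. Qed.

Section Base.
Variable k : fieldType.
Hypothesis c0 : [pchar k] =i pred0.
Variables d m s : nat.
Hypothesis hdm : (m <= d.+1)%N.
Local Notation W := {ffun hmon d -> k^o}.

Definition P0 : vec3 k := fun j => if val j == 2%N then 1 else 0.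

Definition ax (a : Ttop m) := bmnm (val a) i0.
Definition ay (a : Ttop m) := bmnm (val a) i1.

Lemma axy (a : Ttop m) : (ax a + ay a + bmnm (val a) i2)%N = m.-1.
Proof. case: a => a h; rewrite /ax /ay /=; move/eqP: h; rewrite mdeg3; lia. Qed.

Lemma aj_pf (a : Ttop m) : (mdeg (mk3 (ax a) (ay a) 0) < m)%N.
Proof. rewrite mdeg_mk3; have := axy a; have := bmdeg (val a); lia. Qed.

Definition aj (a : Ttop m) : 'X_{1..3 < m} := BMultinom (aj_pf a).

Lemma um_pf1 (a : Ttop m) : (mdeg (mk3 (ax a) (ay a) (d - ax a - ay a)) < d.+1)%N.
Proof. rewrite mdeg_mk3; have := axy a; have := bmdeg (val a); lia. Qed.

Lemma um_pf2 (a : Ttop m) : mdeg (BMultinom (um_pf1 a)) == d.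
Proof. apply/eqP => /=; rewrite mdeg_mk3; have := axy a; have := bmdeg (val a); lia. Qed.

Definition um (a : Ttop m) : hmon d := exist _ (BMultinom (um_pf1 a)) (um_pf2 a).

Definition ebasis (mu : hmon d) : W := [ffun nu => ((nu == mu)%:R : k^o)].

Lemma form_ebasis mu : form_of (ebasis mu) = 'X_[val (val mu)].
Proof.
rewrite form_ofE (bigD1 mu) //= ffunE eqxx scale1r big1 ?addr0 // => nu hnu.
by rewrite ffunE (negbTE hnu) scale0r.
Qed.

Lemma ttop_inj (a a' : Ttop m) : ax a = ax a' -> ay a = ay a' -> a = a'.
Proof.
move=> hx hy.
have h2 : bmnm (val a) i2 = bmnm (val a') i2.
  have := axy a; have := axy a'; rewrite hx hy; lia.
by apply/val_inj/val_inj/mnm3P.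
Qed.

Lemma base_val (Q V : 'I_s -> vec3 k) (a a' : Ttop m) :
  phi P0 Q V (inl (aj a)) (ebasis (um a')) =
  if (ax a == ax a') && (ay a == ay a') then ((ax a)`! * (ay a)`!)%:R else 0.
Proof.
rewrite /phi form_ebasis /= mderivmX mevalZ mevalX prod3 prod3n !mnmBE.
have [ex ey ez] := mk3E (ax a') (ay a') (d - ax a' - ay a').
have [fx fy fz] := mk3E (ax a) (ay a) 0.
rewrite /= ex ey ez fx fy fz /P0 /= expr1n mulr1.
case: (ltngtP (ax a') (ax a)) => h1.
- by rewrite ffact_small // !mul0n mul0r.
- have hz : (ax a' - ax a == 0)%N = false by apply/negbTE; rewrite subn_eq0 -ltnNge.
  by rewrite expr0n hz mul0r mulr0.
rewrite h1 subnn expr0 mul1r ffactnn /=.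
case: (ltngtP (ay a') (ay a)) => h2.
- by rewrite (ffact_small h2) !muln0 mul0n mul0r.
- have hz : (ay a' - ay a == 0)%N = false by apply/negbTE; rewrite subn_eq0 -ltnNge.
  by rewrite expr0n hz mulr0.
by rewrite h2 subnn expr0 mulr1 ffactnn ffactn0 muln1.
Qed.

Lemma base_trig (Q V : 'I_s -> vec3 k) :
  trig 0 (phi P0 Q V) (fun a : 'I_#|{: Ttop m}| => inl (aj (enum_val a)))
    (fun a => ebasis (um (enum_val a))).
Proof.
split => [a b hab|a]; rewrite base_val.
  case: ifP => // /andP[/eqP hx /eqP hy].
  have := enum_val_inj (ttop_inj hx hy); move=> e; move: hab; rewrite e ltnn //.
rewrite !eqxx /=; apply/eqP; apply: natf_ne0 => //.
by rewrite muln_gt0 !fact_gt0.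
Qed.

End Base.


Section Greedy.
Variable k : fieldType.
Hypothesis c0 : [pchar k] =i pred0.
Variables d m s : nat.
Hypothesis hdm : (m <= d.+1)%N.
Local Notation W := {ffun hmon d -> k^o}.
Local Notation N := #|{: hmon d}|.
Local Notation b := #|{: Ttop m}|.

Lemma form_of_coef (c : W) (mu : hmon d) : (form_of c)@_(val (val mu)) = c mu.
Proof.
rewrite form_ofE raddf_sum (bigD1 mu) //= mcoeffZ mcoeffX eqxx mulr1 big1 ?addr0 //.
move=> nu hnu; rewrite mcoeffZ mcoeffX.
case: eqP => [e|]; last by rewrite mulr0.
by move: hnu; rewrite (val_inj (val_inj e)) eqxx.
Qed.

Lemma form_of_inj (c1 c2 : W) : form_of c1 = form_of c2 -> c1 = c2.
Proof. by move=> e; apply/ffunP => mu; rewrite -!form_of_coef e. Qed.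

Lemma form_of0 : form_of (0 : W) = 0.
Proof. by rewrite form_ofE big1 // => mu _; rewrite ffunE scale0r. Qed.

Definition okidx t (j : cond m s) : bool :=
  match j with inl _ => true | inr (i, _) => (i < t)%N end.

Definition upd (Q : 'I_s -> vec3 k) (t : nat) (q : vec3 k) : 'I_s -> vec3 k :=
  fun i => if val i == t then q else Q i.

Lemma phi_upd Q V t q v j (c : W) : okidx t j ->
  phi (P0 k) (upd Q t q) (upd V t v) j c = phi (P0 k) Q V j c.
Proof.
case: j => [a|[i []]] //= h; rewrite /phi /= /upd (ltn_eqF h) //.
Qed.

Definition el (l0 : 'I_3) : vec3 k := fun l => if l == l0 then 1 else 0.

Lemma phi_ev Q V t (ti : 'I_s) q v (c : W) : val ti = t ->
  phi (P0 k) (upd Q t q) (upd V t v) (inr (ti, false) : cond m s) c = (form_of c).@[q].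
Proof. by move=> e; rewrite /phi /= /upd e eqxx. Qed.

Lemma phi_der Q V t (ti : 'I_s) q l0 (c : W) : val ti = t ->
  phi (P0 k) (upd Q t q) (upd V t (el l0)) (inr (ti, true) : cond m s) c = ((form_of c)^`M(l0)).@[q].
Proof.
move=> e; rewrite /phi /= /upd e eqxx (bigD1 l0) //= /el eqxx mul1r big1 ?addr0 //.
by move=> l hl; rewrite (negbTE hl) mul0r.
Qed.

Definition Inv t := exists (Q V : 'I_s -> vec3 k) r (js : 'I_r -> cond m s) (us : 'I_r -> W),
  [/\ r = minn N (b + 2 * t), (forall a, okidx t (js a)) & trig 0 (phi (P0 k) Q V) js us].

Lemma inv0 : Inv 0.
Proof.
exists (fun _ _ => 0), (fun _ _ => 0), b,
  (fun a : 'I_b => inl (aj hdm (enum_val a))), (fun a => ebasis k (um hdm (enum_val a))).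
split => //; last exact: base_trig.
rewrite muln0 addn0 card_hmon card_Ttop.
have : ('C(m.+1, 2) <= 'C(d.+2, 2))%N by apply: leq_bin2l.
lia.
Qed.

Lemma inv_step t : Inv t -> (t < s)%N -> Inv t.+1.
Proof.
move=> [Q [V [r [js [us [hr hok htr]]]]]] ht.
pose ti := Ordinal ht.
have hti : val ti = t by [].
have okS : forall j, okidx t j -> okidx t.+1 j.
  by case=> [//|[i bb]] /= h; exact: ltnW.
case: (leqP N (b + 2 * t)) => hN.
  exists Q, V, r, js, us; split => //; first by rewrite hr; lia.
  by move=> a; apply: okS.
have [U [hU hmem]] := @ker_family k W 'I_r (fun a => phi (P0 k) Q V (js a))
  (fun a => phi_lin _ _ _ _).
have {}hU : (N - r <= \dim U)%N by move: hU; rewrite dim_ffunK card_ord => h; exact: h.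
have Unz : U != 0%VS by rewrite -dimv_eq0 -lt0n; lia.
pose f := vpick U.
have fU : f \in U := memv_pick U.
have fnz : f != 0 by rewrite vpick0.
have Fnz : form_of f != 0.
  apply: contra fnz => /eqP h; apply/eqP; apply: form_of_inj; by rewrite h form_of0.
have tr_old : forall q v, trig 0 (phi (P0 k) (upd Q t q) (upd V t v)) js us.
  move=> q v; apply: trig_ext htr => a c; exact: phi_upd.
case: (leqP N (b + 2 * t).+1) => hN1.
- have [q hq] := mpoly_nz_point (char0_inf c0) Fnz.
  exists (upd Q t q), (upd V t (fun _ => 0)), (r + 1)%N,
    (jcat js (fun _ : 'I_1 => (inr (ti, false) : cond m s))), (jcat us (fun _ : 'I_1 => f)).
  split.
  + lia.
  + move=> a; rewrite /jcat; case: splitP => a0 _; [exact: okS | by rewrite /= ltnSn].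
  + apply: trig_cat => //.
    * split => [a b'|a]; first by rewrite !ord1 ltnn.
      by rewrite phi_ev //; apply/eqP.
    * move=> a _; rewrite phi_upd ?hok //; exact: hmem.
have dU2 : (1 < \dim U)%N by lia.
have [g gU gnot] : exists2 g, g \in U & g \notin <[f]>%VS.
  apply/subvPn; apply/negP => sub; have := dimvS sub; rewrite dim_vline fnz; lia.
set F := form_of f; set G := form_of g.
have nw : ~ (forall q l, F.@[q] * (G^`M(l)).@[q] = G.@[q] * (F^`M(l)).@[q]).
  move=> H; have [c hc] := wronsk c0 Fnz H.
  move: gnot; suff -> : g = c *: f by rewrite memvZ ?memv_line.
  by apply: form_of_inj; rewrite form_ofZ.
have [q hq] := not_all_ex_not _ _ nw.
have [l hl] := not_all_ex_not _ _ hq.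
pose u1 := if F.@[q] != 0 then f else g.
pose u2 := G.@[q] *: f + (- F.@[q]) *: g.
have u1U : u1 \in U by rewrite /u1; case: ifP.
have u2U : u2 \in U by rewrite memvD // memvZ.
have ev1 : (form_of u1).@[q] != 0.
  rewrite /u1; case: ifP => // /negbFE/eqP hF; apply/eqP => hG; apply: hl.
  by rewrite hF -/G hG !mul0r.
have ev2 : (form_of u2).@[q] = 0.
  by rewrite /u2 form_of_lin form_ofZ mevalD !mevalZ -/F -/G; ring.
have der2 : ((form_of u2)^`M(l)).@[q] != 0.
  rewrite /u2 form_of_lin form_ofZ mderivD !mderivZ mevalD !mevalZ -/F -/G.
  apply/eqP => h; apply: hl; move/eqP: h; rewrite mulNr subr_eq0 => /eqP h.
  exact: esym h.
pose js2 : 'I_2 -> cond m s := fun a => if val a == 0%N then inr (ti, false) else inr (ti, true).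
pose us2 : 'I_2 -> W := fun a => if val a == 0%N then u1 else u2.
exists (upd Q t q), (upd V t (el l)), (r + 2)%N, (jcat js js2), (jcat us us2).
split.
- lia.
- move=> a; rewrite /jcat; case: splitP => a0 _; first exact: okS.
  by rewrite /js2; case: ifP => _ /=; rewrite ltnSn.
- apply: trig_cat => //.
  + split.
      move=> a b'; case: a => [[|[|a]] ha] //; case: b' => [[|[|b']] hb] // _.
      have -> : js2 (Ordinal ha) = inr (ti, false) by [].
      have -> : us2 (Ordinal hb) = u2 by [].
      by rewrite phi_ev.
    move=> a; case: a => [[|[|a]] ha] //.
      have -> : js2 (Ordinal ha) = inr (ti, false) by [].
      have -> : us2 (Ordinal ha) = u1 by [].
      by rewrite phi_ev //; apply/eqP.
    have -> : js2 (Ordinal ha) = inr (ti, true) by [].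
    have -> : us2 (Ordinal ha) = u2 by [].
    by rewrite phi_der //; apply/eqP.
  + move=> a b'; rewrite phi_upd ?hok //; rewrite /us2; case: ifP => _; exact: hmem.
Qed.

Lemma inv_all t : (t <= s)%N -> Inv t.
Proof.
elim: t => [|t IH] h; first exact: inv0.
exact: inv_step (IH (ltnW h)) h.
Qed.

End Greedy.


Lemma cond_val_ext (k : fieldType) m s (P P' : vec3 k) (Q Q' V V' : 'I_s -> vec3 k)
  (F : {mpoly k[3]}) (j : cond m s) :
  P =1 P' -> (forall i, Q i =1 Q' i) -> (forall i, V i =1 V' i) ->
  cond_val P Q V F j = cond_val P' Q' V' F j.
Proof.
move=> hP hQ hV; case: j => [a|[i []]] /=.
- exact: meval_eq.
- apply: eq_bigr => l _; rewrite hV; congr (_ * _); exact: meval_eq.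
- exact: meval_eq.
Qed.

Section X0.
Variable k : fieldType.
Variable s : nat.
Variables Q V : 'I_s -> vec3 k.

Definition x0of : 'I_(6 * s + 2).+1 -> k := fun idx =>
  let n := nat_of_ord idx in
  if (n < 3)%N then (if n == 2%N then 1 else 0)
  else let t := (n - 3)%N in
   oapp (fun i : 'I_s => if (t %% 6 < 3)%N then Q i (inord (t %% 6)%N)
                         else V i (inord (t %% 6 - 3)%N)) 0 (insub (t %/ 6)%N).

Lemma par_P_x0 j : par_P x0of j = P0 k j.
Proof.
rewrite /par_P /x0of inordK; last by have := ltn_ord j; lia.
by rewrite ltn_ord /P0.
Qed.

Lemma par_Q_x0 i j : par_Q x0of i j = Q i j.
Proof.
rewrite /par_Q /x0of inordK; last by have := ltn_ord j; have := ltn_ord i; lia.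
have h1 : ((3 + 6 * i + j) < 3)%N = false by lia.
have h2 : ((3 + 6 * i + j - 3) %/ 6)%N = i.
  by rewrite -addnA addKn mulnC divnMDl // divn_small ?addn0 //; have := ltn_ord j; lia.
have h3 : ((3 + 6 * i + j - 3) %% 6)%N = j.
  by rewrite -addnA addKn mulnC modnMDl modn_small //; have := ltn_ord j; lia.
by rewrite h1 h2 h3 valK /= ltn_ord inord_val.
Qed.

Lemma par_V_x0 i j : par_V x0of i j = V i j.
Proof.
rewrite /par_V /x0of inordK; last by have := ltn_ord j; have := ltn_ord i; lia.
have h1 : ((6 + 6 * i + j) < 3)%N = false by lia.
have h2 : ((6 + 6 * i + j - 3) %/ 6)%N = i.
  have -> : (6 + 6 * i + j - 3 = i * 6 + (3 + j))%N by lia.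
  by rewrite divnMDl // divn_small ?addn0 //; have := ltn_ord j; lia.
have h3 : ((6 + 6 * i + j - 3) %% 6)%N = (3 + j)%N.
  have -> : (6 + 6 * i + j - 3 = i * 6 + (3 + j))%N by lia.
  by rewrite modnMDl modn_small //; have := ltn_ord j; lia.
rewrite h1 h2 h3 valK /=.
by rewrite addKn inord_val.
Qed.

End X0.

Unset Implicit Arguments.

Theorem lemma2p6 (k : closedFieldType) (char0 : [pchar k] =i pred0)
    (s m d : nat) (hdm : (m <= d.+1)%N) :
  exists G : {mpoly k[(6 * s + 2).+1]}, G != 0 /\
    forall x : 'I_(6 * s + 2).+1 -> k, G.@[x] != 0 ->
      h0_IX d m s (par_P x) (par_Q x) (par_V x)
        = ('C(d.+2, 2) - 'C(m.+1, 2) - 2 * s)%N.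
Proof.
have [Q [V [r [js [us [hr hok [htr hdi]]]]]]] := inv_all char0 hdm (leqnn s).
have [G hG] := poly_det js us.
pose x0 := x0of Q V.
have hx0 : forall (j : cond m s) (c : {ffun hmon d -> k^o}), phi (par_P x0) (par_Q x0) (par_V x0) j c = phi (P0 k) Q V j c.
  move=> j c; rewrite /phi; apply: cond_val_ext => [l|i l|i l].
  - exact: par_P_x0.
  - exact: par_Q_x0.
  - exact: par_V_x0.
have Gx0 : G.@[x0] != 0.
  rewrite hG det_trig.
    by apply/prodf_neq0 => a _; rewrite mxE hx0; apply/eqP; exact: hdi.
  by apply/is_trig_mxP => a b' hab; rewrite mxE hx0; exact: htr.
exists G; split.
  by apply: contraNneq Gx0 => ->; rewrite meval0.
move=> x hx.
have lb := h0_lb char0 hdm (par_P x) (par_Q x) (par_V x).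
have ub := @dim_ub k {ffun hmon d -> k^o} r
  (fun a => phi (par_P x) (par_Q x) (par_V x) (js a)) us
  (lker (linfun (@ev_map k d m s (par_P x) (par_Q x) (par_V x))))
  (fun a => phi_lin _ _ _ _).
have {}ub : (h0_IX d m s (par_P x) (par_Q x) (par_V x) + r <= #|{: hmon d}|)%N.
  rewrite /h0_IX -(dim_ffunK k (hmon d)); apply: ub.
    by rewrite -hG.
  by move=> v a hv; exact: (mem_K hv (js a)).
rewrite card_hmon card_Ttop in lb hr ub.
lia.
Qed.
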